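(* Let $\mathbf{B}\in\mathbb{R}^{n\times n}$ be a nonsingular matrix, $\mathcal L=\mathbf{B}\mathbb{Z}^n$, $s>0$, $\mathbf{c}\in\mathbb{R}^n$ and $\mathcal R>0$. Let $\mathcal X_{\mathcal R}:=\{\mathbf{x}\in\mathbb{Z}^n:\|\mathbf{B}\mathbf{x}-\mathbf{c}\|\le\mathcal R\}$, and assume $\mathcal X_{\mathcal R}\neq\emptyset$ (so that $Q(\mathcal X_{\mathcal R})>0$ and $\rho_{s,\mathbf c}(\mathbf B\mathcal X_{\mathcal R})>0$). Define the probability distributions on $\mathbb{Z}^n$ (both zero outside $\mathcal X_{\mathcal R}$) $$\pi_{\mathcal R}(\mathbf x)=\frac{\rho_{s,\mathbf c}(\mathbf B\mathbf x)}{\rho_{s,\mathbf c}(\mathbf B\mathcal X_{\mathcal R})},\qquad Q_{\mathcal R}(\mathbf x)=\frac{Q(\mathbf x)}{Q(\mathcal X_{\mathcal R})}\qquad(\mathbf x\in\mathcal X_{\mathcal R}),$$ where $Q(\mathcal X_{\mathcal R})=\sum_{\mathbf x\in\mathcal X_{\mathcal R}}Q(\mathbf x)$ and $\rho_{s,\mathbf c}(\mathbf B\mathcal X_{\mathcal R})=\sum_{\mathbf x\in\mathcal X_{\mathcal R}}\rho_{s,\mathbf c}(\mathbf B\mathbf x)$. Set $$\Delta_{\mathcal R}:=\frac{\rho_{s,\mathbf c}(\mathbf B\mathcal X_{\mathcal R})}{\prod_{i=1}^n\rho_{s_i}(\mathbb Z)},\qquad p_{\mathcal R}:=\frac{\Delta_{\mathcal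 R}}{Q(\mathcal X_{\mathcal R})}.$$ Then $p_{\mathcal R}\in(0,1]$ (equivalently $Q(\mathcal X_{\mathcal R})\ge\Delta_{\mathcal R}>0$), and for every $\mathbf x\in\mathbb Z^n$, $$Q_{\mathcal R}(\mathbf x)\ge p_{\mathcal R}\,\pi_{\mathcal R}(\mathbf x).$$
   Context: For $s>0$ and $c\in\mathbb{R}^k$, $\rho_{s,c}(y)=\exp(-\pi\|y-c\|^2/s^2)$ for $y\in\mathbb R^k$, $\rho_s:=\rho_{s,0}$, and for a countable set $S$, $\rho_{s,c}(S)=\sum_{y\in S}\rho_{s,c}(y)$. Let $\mathbf B=\mathbf Q\mathbf R$ be a QR decomposition ($\mathbf Q$ orthogonal, $\mathbf R=(r_{ij})$ upper triangular), $\mathbf c'=\mathbf Q^{\top}\mathbf c$. For $\mathbf x\in\mathbb Z^n$ and $i=1,\dots,n$, put $s_i:=s/|r_{ii}|$ and $\mu_i(\mathbf x_{>i}):=\big(c'_i-\sum_{j>i}r_{ij}x_j\big)/r_{ii}$. The Klein distribution on $\mathbb Z^n$ is $$Q(\mathbf x):=\prod_{i=1}^n\frac{\rho_{s_i,\mu_i(\mathbf x_{>i})}(x_i)}{\rho_{s_i,\mu_i(\mathbf x_{>i})}(\mathbb Z)}=\frac{\rho_{s,\mathbf c}(\mathbf B\mathbf x)}{\prod_{i=1}^n\rho_{s_i,\mu_i(\mathbf x_{>i})}(\mathbb Z)},$$ using the identity $\rho_{s,\mathbf c}(\mathbf B\mathbf x)=\prod_{i=1}^n\rho_{s_i,\mu_i(\mathbf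 x_{>i})}(x_i)$. *)

(* Defs.v *)
From HB Require Import structures.
From mathcomp Require Import all_boot all_order all_algebra.
From mathcomp Require Import all_classical all_reals.
From mathcomp Require Import ereal topology normedtype sequences esum exp trigo.
Set Implicit Arguments. Unset Strict Implicit. Unset Printing Implicit Defensive.
Import Order.TTheory GRing.Theory Num.Theory.
Local Open Scope classical_set_scope.
Local Open Scope ring_scope.

Section Klein.
Variables (R : realType).

Definition vnorm (n : nat) (v : 'cV[R]_n) : R := Num.sqrt (\sum_(i < n) v i 0 ^+ 2).

Definition rhov (n : nat) (s : R) (c y : 'cV[R]_n) : R :=
  expR (- pi * (vnorm (y - c)) ^+ 2 / s ^+ 2).

Definition rho1 (s c y : R) : R := expR (- pi * (y - c) ^+ 2 / s ^+ 2).

Definition rhoZ (s c : R) : R :=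
  fine (\esum_(k in [set: int]) (rho1 s c k%:~R)%:E).

Definition intv (n : nat) (x : 'cV[int]_n) : 'cV[R]_n := map_mx (fun z : int => z%:~R) x.

Definition s_i (n : nat) (s : R) (Rm : 'M[R]_n) (i : 'I_n) : R := s / `|Rm i i|.

Definition mu_i (n : nat) (Qm Rm : 'M[R]_n) (c : 'cV[R]_n) (x : 'cV[int]_n)
    (i : 'I_n) : R :=
  (((Qm^T *m c) i 0) - \sum_(j < n | (i < j)%N) Rm i j * (x j 0)%:~R) / Rm i i.

Definition kleinQ (n : nat) (s : R) (Qm Rm : 'M[R]_n) (c : 'cV[R]_n)
    (x : 'cV[int]_n) : R :=
  \prod_(i < n) (rho1 (s_i s Rm i) (mu_i Qm Rm c x i) (x i 0)%:~R
                 / rhoZ (s_i s Rm i) (mu_i Qm Rm c x i)).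

Definition ballX (n : nat) (B : 'M[R]_n) (c : 'cV[R]_n) (Rad : R) : set 'cV[int]_n :=
  [set x | vnorm (B *m intv x - c) <= Rad].

Definition QX (n : nat) (s : R) (B Qm Rm : 'M[R]_n) (c : 'cV[R]_n) (Rad : R) : R :=
  fine (\esum_(x in ballX B c Rad) (kleinQ s Qm Rm c x)%:E).

Definition rhoX (n : nat) (s : R) (B : 'M[R]_n) (c : 'cV[R]_n) (Rad : R) : R :=
  fine (\esum_(x in ballX B c Rad) (rhov s c (B *m intv x))%:E).

Definition piR (n : nat) (s : R) (B : 'M[R]_n) (c : 'cV[R]_n) (Rad : R)
    (x : 'cV[int]_n) : R :=
  if x \in ballX B c Rad then rhov s c (B *m intv x) / rhoX s B c Rad else 0.

Definition QR (n : nat) (s : R) (B Qm Rm : 'M[R]_n) (c : 'cV[R]_n) (Rad : R)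
    (x : 'cV[int]_n) : R :=
  if x \in ballX B c Rad then kleinQ s Qm Rm c x / QX s B Qm Rm c Rad else 0.

Definition DeltaR (n : nat) (s : R) (B Rm : 'M[R]_n) (c : 'cV[R]_n) (Rad : R) : R :=
  rhoX s B c Rad / \prod_(i < n) rhoZ (s_i s Rm i) 0.

Definition pR (n : nat) (s : R) (B Qm Rm : 'M[R]_n) (c : 'cV[R]_n) (Rad : R) : R :=
  DeltaR s B Rm c Rad / QX s B Qm Rm c Rad.

End Klein.

(* Main.v *)
Require Import Defs.
From HB Require Import structures.
From mathcomp Require Import all_boot all_order all_algebra.
From mathcomp Require Import all_classical all_reals.
From mathcomp Require Import ereal topology normedtype sequences esum exp trigo.
From mathcomp Require Import zify ring lra.
Import Order.TTheory GRing.Theory Num.Theory.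
Local Open Scope classical_set_scope.
Local Open Scope ring_scope.
Set Implicit Arguments. Unset Strict Implicit. Unset Printing Implicit Defensive.
Section Th.
Variable R : realType.
Local Open Scope ereal_scope.

Lemma esumZ (T : choiceType) (S : set T) (f : T -> \bar R) (r : R) :
  (0 <= r)%R -> (forall x, S x -> 0 <= f x) ->
  \esum_(i in S) (r%:E * f i) = r%:E * \esum_(i in S) f i.
Proof.
move=> r0 f0; rewrite /esum -ereal_supZl//; last first.
  by apply/set0P; exists 0; exists set0; [exact: fsets_set0|rewrite fsbig_set0].
congr ereal_sup; apply/seteqP; split=> x /=.
  move=> [A [finA AS] <-]; exists (\sum_(i \in A) f i); first by exists A.
  rewrite !fsbig_finite// big_seq [in RHS]big_seq ge0_sume_distrr// => i.
  by rewrite in_fset_set// inE => /AS /f0.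
move=> [y [A [finA AS] <-] <-]; exists A => //.
rewrite !fsbig_finite// big_seq [in RHS]big_seq ge0_sume_distrr// => i.
by rewrite in_fset_set// inE => /AS /f0.
Qed.
End Th.
Section Th2.
Variable R : realType.
Local Open Scope ereal_scope.

Lemma geo_bound (q : R) : (0 < q)%R -> (q < 1)%R ->
  \sum_(0 <= i <oo) ((q ^+ i)%:E) <= ((1 - q)^-1)%:E.
Proof.
move=> q0 q1.
have : forall n, (0 <= n)%N -> xpredT n -> 0 <= (q ^+ n)%:E.
  by move=> m _ _; rewrite lee_fin exprn_ge0// ltW.
move/ereal_nondecreasing_series/ereal_nondecreasing_cvgn/cvg_lim => -> //.
apply: ge_ereal_sup => _ [k _ <-] /=.
rewrite sumEFin lee_fin.
have := @geometric_le_lim R k 1 q ler01 q0.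
rewrite gtr0_norm// => /(_ q1); rewrite mul1r; apply: le_trans.
rewrite le_eqVlt; apply/orP; left; apply/eqP; rewrite /series/= /geometric/=.
by apply: eq_bigr => i _; rewrite mul1r.
Qed.

Lemma esum_int (f : int -> \bar R) : (forall k, 0 <= f k) ->
  \esum_(k in [set: int]) f k =
  \esum_(m in [set: nat]) f (Posz m) + \esum_(m in [set: nat]) f (Negz m).
Proof.
move=> f0; rewrite (esumID (range Posz)) //.
rewrite setTI (esum_image [set: nat] Posz f); last by move=> x y _ _ [].
have -> : [set: int] `&` ~` range Posz = range Negz.
  apply/seteqP; split => x /=.
    by case: x => m [_ /=]; [case; exists m|exists m].
  by move=> [m _ <-]; split => // -[k _].
by rewrite (esum_image [set: nat] Negz f) //; move=> x y _ _ [].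
Qed.
End Th2.
Section Th3.
Variable R : realType.

Definition gE (a x : R) : R := expR (- a * x ^+ 2)%R.
Definition th (a c : R) : \bar R :=
  \esum_(k in [set: int]) (gE a (k%:~R + c)%R)%:E.

Lemma gE_gt0 a x : (0 < gE a x)%R. Proof. exact: expR_gt0. Qed.
Lemma gE_ge0 a x : (0 <= gE a x)%R. Proof. exact: expR_ge0. Qed.

Lemma th_ge0 a c : (0 <= th a c)%E.
Proof. by apply: esum_ge0 => k _; rewrite lee_fin gE_ge0. Qed.

Lemma th_shift a c (j : int) : th a (c + j%:~R) = th a c.
Proof.
rewrite [RHS](reindex_esum [set: int] [set: int] (fun k : int => k + j)
   (fun k => (gE a (k%:~R + c)%R)%:E)); last first.
  split=> //; first by move=> x y _ _ /addIr.
  by move=> y _; exists (y - j) => //; rewrite subrK.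
apply: eq_esum => k _; congr (_%:E); congr (gE a _).
by rewrite intrD addrA [_ + c]addrC addrA [c + _]addrC.
Qed.

Lemma gE_absk a (k : int) : (0 < a)%R ->
  (gE a (k%:~R + 0) <= expR (- a) ^+ `|k|)%R.
Proof.
move=> a0; rewrite addr0 /gE -expRM_natr ler_expR !mulNr lerN2 ler_pM2l//.
rewrite -[k%:~R ^+ 2]intr_normK ?intr_int// -intr_norm -natr_absz -natrX ler_nat.
by case: (absz k) => // m; rewrite expnS leq_pmulr.
Qed.

End Th3.
Section Th4.
Variable R : realType.

Lemma th_lt0 (a : R) : 0 < a -> (th a 0 < +oo)%E.
Proof.
move=> a0; set q := expR (- a).
have q0 : 0 < q by exact: expR_gt0.
have q1 : q < 1 by rewrite expR_lt1 oppr_lt0.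
apply: (@le_lt_trans _ _ (\esum_(k in [set: int]) (q ^+ `|k|)%:E)%E).
  by apply: le_esum => k _; rewrite lee_fin gE_absk.
rewrite esum_int; last by move=> k; rewrite lee_fin exprn_ge0// ltW.
rewrite -!nneseries_esumT; [|by move=> k; rewrite lee_fin exprn_ge0// ltW..].
apply: (@le_lt_trans _ _ (((1 - q)^-1)%:E + ((1 - q)^-1)%:E)%E); last by rewrite ltry.
apply: leeD; first exact: geo_bound.
apply: le_trans (geo_bound q0 q1).
apply: lee_nneseries => m; rewrite ?lee_fin => *; first by rewrite exprn_ge0// ltW.
by rewrite exprS ler_piMl// ?exprn_ge0// ltW.
Qed.
End Th4.
Section Th5.
Variable R : realType.

Lemma gE_le (a x y : R) : 0 < a -> y ^+ 2 <= x ^+ 2 -> gE a x <= gE a y.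
Proof. by move=> a0 h; rewrite /gE ler_expR !mulNr lerN2 ler_pM2l. Qed.

Lemma th_bound (a c : R) : 0 < a -> (th a c <= th a 0 + th a 0)%E.
Proof.
move=> a0; set j := Num.floor c; set t := c - j%:~R.
have cE : c = t + j%:~R by rewrite /t subrK.
have t0 : 0 <= t by rewrite /t subr_ge0 real_floor_le// num_real.
have t1 : t < 1.
  by rewrite /t ltrBlDr addrC -[1]/(1%:~R) -intrD real_floorD1_gt// num_real.
rewrite cE th_shift.
rewrite -{2}(th_shift a 0 1) /th -esumD; last 2 first.
  by move=> k _; rewrite lee_fin gE_ge0.
  by move=> k _; rewrite lee_fin gE_ge0.
apply: le_esum => k _; rewrite lee_fin.
have [k0|k0] := lerP 0 k.
  have K0 : 0 <= (k%:~R : R) by rewrite ler0z.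
  rewrite -[gE a (k%:~R + t)]addr0; apply: lerD; last exact: gE_ge0.
  apply: gE_le => //; rewrite addr0; nra.
have K0 : (k%:~R : R) <= -1.
  have : k <= -1 by move: k0; clear; lia.
  by rewrite -(ler_int R).
rewrite -[gE a (k%:~R + t)]add0r; apply: lerD; first exact: gE_ge0.
apply: gE_le => //; rewrite add0r; nra.
Qed.

Lemma th_fin (a c : R) : 0 < a -> th a c \is a fin_num.
Proof.
move=> a0; rewrite ge0_fin_numE ?th_ge0//.
apply: le_lt_trans (th_bound c a0) _.
by rewrite lte_add_pinfty// th_lt0.
Qed.

Lemma th_gt0 (a c : R) : (0 < th a c)%E.
Proof.
apply: (@lt_le_trans _ _ (gE a (0%:~R + c))%:E); first by rewrite lte_fin gE_gt0.
apply: esum_ge; exists [set 0] => //; last by rewrite fsbig_set1.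
Qed.
End Th5.
Section Th6.
Variable R : realType.

Lemma parity_split (k l : int) :
  (exists m m' : int, k = m + m' /\ l = m - m') \/
  (exists m m' : int, k = m + m' + 1 /\ l = m - m').
Proof.
have := divz_eq (k + l) 2; set m := ((k + l) %/ 2)%Z; set r := ((k + l) %% 2)%Z.
have r0 : 0 <= r by rewrite /r modz_ge0.
have r2 : r < 2 by rewrite /r ltz_pmod.
move=> e.
have [r00|r1] : r = 0 \/ r = 1 by lia.
  left; exists m, (k - m); split; lia.
right; exists m, (k - m - 1); split; lia.
Qed.

Lemma parity_disj (m m' n n' : int) :
  (m + m', m - m') <> (n + n' + 1, n - n').
Proof. by case=> h1 h2; lia. Qed.
End Th6.
Section Th7.
Variable R : realType.
Local Open Scope ereal_scope.

Lemma esum_prod (f g : int -> R) : (forall k, 0 <= f k)%R -> (forall k, 0 <= g k)%R ->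
  \esum_(l in [set: int]) (g l)%:E \is a fin_num ->
  (\esum_(k in [set: int]) (f k)%:E) * (\esum_(l in [set: int]) (g l)%:E) =
  \esum_(p in [set: int * int]) (f p.1 * g p.2)%:E.
Proof.
move=> f0 g0 gfin.
have -> : [set: int * int] = [set: int] `*`` (fun=> [set: int]).
  by apply/seteqP; split.
rewrite -(@esum_esum _ _ _ [set: int] (fun=> [set: int]) (fun i j => (f i * g j)%:E)); last by move=> i j _ _; rewrite lee_fin mulr_ge0.
set G := (\esum_(l in [set: int]) (g l)%:E).
have GE : G = (fine G)%:E by rewrite fineK.
transitivity (\esum_(i in [set: int]) ((fine G)%:E * (f i)%:E)).
  by rewrite esumZ ?fine_ge0 ?esum_ge0// -?GE 1?muleC// => *; rewrite lee_fin.
apply: eq_esum => i _.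
rewrite -GE muleC /G -esumZ// => *; last by rewrite lee_fin.

Qed.
End Th7.
Section Th8.
Variable R : realType.
Local Open Scope ereal_scope.

Lemma th_mul (a c d : R) : (0 < a)%R ->
  th a c * th a d =
  th (2 * a) ((c + d) / 2) * th (2 * a) ((c - d) / 2) +
  th (2 * a) ((c + d + 1) / 2) * th (2 * a) ((c - d + 1) / 2).
Proof.
move=> a0; have a2 : (0 < 2 * a)%R by rewrite mulr_gt0.
have fd := th_fin d a0; have f2 := th_fin ((c - d) / 2) a2.
have f3 := th_fin ((c - d + 1) / 2) a2.
rewrite /th in fd f2 f3.
rewrite /th (esum_prod (f := fun k => gE a (k%:~R + c)) (g := fun l => gE a (l%:~R + d))) //; last 2 first.
  by move=> k; exact: gE_ge0.
  by move=> k; exact: gE_ge0.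
rewrite (esum_prod (f := fun k => gE (2 * a) (k%:~R + (c + d) / 2))
                   (g := fun l => gE (2 * a) (l%:~R + (c - d) / 2))) //; last 2 first.
  by move=> k; exact: gE_ge0.
  by move=> k; exact: gE_ge0.
rewrite (esum_prod (f := fun k => gE (2 * a) (k%:~R + (c + d + 1) / 2))
                   (g := fun l => gE (2 * a) (l%:~R + (c - d + 1) / 2))) //; last 2 first.
  by move=> k; exact: gE_ge0.
  by move=> k; exact: gE_ge0.
pose f0 : int * int -> int * int := fun p => (p.1 + p.2, p.1 - p.2)%R.
pose f1 : int * int -> int * int := fun p => (p.1 + p.2 + 1, p.1 - p.2)%R.
rewrite (esumID (range f0)); last by move=> p _; rewrite lee_fin mulr_ge0 ?gE_ge0.
have inj0 : set_inj [set: int * int] f0.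
  by move=> [x y] [x' y'] _ _ [h1 h2]; congr pair; lia.
have inj1 : set_inj [set: int * int] f1.
  by move=> [x y] [x' y'] _ _ [h1 h2]; congr pair; lia.
congr (_ + _).
  rewrite setTI (esum_image [set: int * int] f0 (fun p => (gE a (p.1%:~R + c) * gE a (p.2%:~R + d))%:E)) //.
  apply: eq_esum => -[m m'] _ /=; congr (_%:E).
  by rewrite /gE -!expRD; congr expR; rewrite !intrD !intrN; field.
have -> : [set: int * int] `&` ~` range f0 = range f1.
  apply/seteqP; split => -[k l] /=.
    move=> [_ nr]; case: (parity_split k l) => [[m [m' [e1 e2]]]|[m [m' [e1 e2]]]].
      by exfalso; apply: nr; exists (m, m') => //; rewrite /f0 /= -e1 -e2.
    by exists (m, m') => //; rewrite /f1 /= -e1 -e2.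
  move=> [[m m'] _ e]; split => // -[[n n'] _ e'].
  by apply: (@parity_disj n n' m m'); rewrite -e in e'.
rewrite (esum_image [set: int * int] f1 (fun p => (gE a (p.1%:~R + c) * gE a (p.2%:~R + d))%:E)) //.
apply: eq_esum => -[m m'] _ /=; congr (_%:E).
by rewrite /gE -!expRD; congr expR; rewrite !intrD !intrN; field.
Qed.
End Th8.
Section Th9.
Variable R : realType.

Definition S (a c : R) : R := fine (th a c).

Lemma thE (a c : R) : 0 < a -> th a c = (S a c)%:E.
Proof. by move=> a0; rewrite /S fineK// th_fin. Qed.

Lemma S_gt0 a c : 0 < a -> 0 < S a c.
Proof. by move=> a0; rewrite -lte_fin -thE// th_gt0. Qed.

Lemma S_mul (a c d : R) : 0 < a ->
  S a c * S a d =
  S (2 * a) ((c + d) / 2) * S (2 * a) ((c - d) / 2) +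
  S (2 * a) ((c + d + 1) / 2) * S (2 * a) ((c - d + 1) / 2).
Proof.
move=> a0; have a2 : 0 < 2 * a by rewrite mulr_gt0.
have := th_mul c d a0; rewrite !thE// -!EFinM -EFinD.
by case.
Qed.

Lemma S_bound (a c : R) : 0 < a -> S a c <= 2 * S a 0.
Proof.
move=> a0; have := th_bound c a0; rewrite !thE// -EFinD lee_fin => h; lra.
Qed.

Lemma S_4 (a c : R) : 0 < a -> S a c ^+ 4 <= S a (2 * c) * S a 0 ^+ 3.
Proof.
move=> a0.
have h1 := S_mul c c a0.
have h2 := S_mul (2 * c) 0 a0.
have h3 := S_mul 0 0 a0.
have e1 : (c + c) / 2 = c by field.
have e2 : (c - c) / 2 = 0 by field.
have e3 : (c + c + 1) / 2 = c + 1 / 2 by field.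
have e4 : (c - c + 1) / 2 = 1 / 2 by field.
have e5 : (2 * c + 0) / 2 = c by field.
have e6 : (2 * c - 0) / 2 = c by field.
have e7 : (2 * c + 0 + 1) / 2 = c + 1 / 2 by field.
have e8 : (2 * c - 0 + 1) / 2 = c + 1 / 2 by field.
have e9 : (0 + 0) / 2 = 0 :> R by field.
have e10 : (0 - 0) / 2 = 0 :> R by field.
have e11 : (0 + 0 + 1) / 2 = 1 / 2 :> R by field.
have e12 : (0 - 0 + 1) / 2 = 1 / 2 :> R by field.
rewrite e1 e2 e3 e4 in h1; rewrite e5 e6 e7 e8 in h2; rewrite e9 e10 e11 e12 in h3.
set x := S (2 * a) c in h1 h2 h3; set y := S (2 * a) 0 in h1 h2 h3.
set z := S (2 * a) (c + 1 / 2) in h1 h2 h3; set w := S (2 * a) (1 / 2) in h1 h2 h3.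
have -> : S a c ^+ 4 = (S a c * S a c) ^+ 2 by rewrite -expr2 -exprM.
rewrite h1.
have -> : S a (2 * c) * S a 0 ^+ 3 = (S a (2 * c) * S a 0) * (S a 0 * S a 0).
  by rewrite !exprS expr0 mulr1; ring.
rewrite h2 h3 -subr_ge0.
have -> : (x * x + z * z) * (y * y + w * w) - (x * y + z * w) ^+ 2 = (x * w - z * y) ^+ 2
  by ring.
exact: sqr_ge0.
Qed.
End Th9.
Section Th10.
Variable R : realType.

Lemma step0 (x e : R) : 0 <= x -> 0 <= e -> x ^+ 4 <= 1 + e -> x <= 1 + e / 4.
Proof.
move=> x0 e0 h; rewrite leNgt; apply/negP => hx.
have h1 : (1 + e / 4) ^+ 4 < x ^+ 4.
  by rewrite ltr_pXn2r// ?nnegrE// addr_ge0// divr_ge0.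
have h2 : 1 + e <= (1 + e / 4) ^+ 4.
  rewrite -subr_ge0.
  have -> : (1 + e / 4) ^+ 4 - (1 + e) = (e / 4) ^+ 2 * (6 + 4 * (e / 4) + (e / 4) ^+ 2).
    by field.
  by rewrite mulr_ge0 ?sqr_ge0// !addr_ge0 ?sqr_ge0// mulr_ge0// divr_ge0.
lra.
Qed.

Lemma step1 (X Y T e : R) : 0 <= X -> 0 < T -> 0 <= e ->
  X ^+ 4 <= Y * T ^+ 3 -> Y <= T * (1 + e) -> X <= T * (1 + e / 4).
Proof.
move=> X0 T0 e0 h1 h2.
have XE : X = (X / T) * T by rewrite divfK// gt_eqF.
rewrite {1}XE mulrC ler_pM2l//; apply: step0 => //; first by rewrite divr_ge0// ltW.
rewrite -(ler_pM2r (exprn_gt0 4 T0)) -exprMn -XE.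
apply: (le_trans h1).
rewrite (_ : T ^+ 4 = T * T ^+ 3); last by rewrite exprS.
rewrite mulrA -subr_ge0.
have -> : (1 + e) * (T * T ^+ 3) - Y * T * (T * T) = (T * (1 + e) - Y) * (T * T * T).
  by rewrite !exprS expr0; ring.
by rewrite mulr_ge0 ?subr_ge0// !mulr_ge0// ltW.
Qed.

Lemma S_iter (a : R) : 0 < a -> forall n c,
  S a c <= S a 0 * (1 + ((4 ^ n)%:R)^-1).
Proof.
move=> a0; elim=> [|n IH] c.
  by rewrite expn0 invr1 (_ : 1 + 1 = 2 :> R) // mulrC S_bound.
have := step1 (X := S a c) (Y := S a (2 * c)) (T := S a 0) (e := ((4 ^ n)%:R)^-1).
rewrite expnS natrM invfM -[4%:R]/4 [_ / 4]mulrC.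
apply; [exact: ltW (S_gt0 _ _) | exact: S_gt0 | by rewrite invr_ge0 | exact: S_4 | exact: IH].
Qed.

Lemma S_le0 (a c : R) : 0 < a -> S a c <= S a 0.
Proof.
move=> a0; have S0 := S_gt0 0 a0.
apply/ler_addgt0Pr => e e0.
set n := Num.truncn ((S a 0) / e).
have h := S_iter a0 n c; apply: (le_trans h).
rewrite mulrDr mulr1 lerD2l.
have : (S a 0) / e < n.+1%:R by exact: truncnS_gt.
move=> hn.
have h4 : (n.+1%:R : R) <= (4 ^ n)%:R.
  rewrite ler_nat; elim: (n) => // k IHk.
  by rewrite expnS; lia.
rewrite ler_pdivrMr ?ltr0n ?expn_gt0//.
rewrite ltr_pdivrMr// in hn.
by apply: (le_trans (ltW hn)); rewrite mulrC ler_wpM2l ?(ltW e0).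
Qed.
End Th10.
Section Mx.
Variable R : realType.

Lemma Rdiag_neq0 (n : nat) (B Qm Rm : 'M[R]_n) :
  B \in unitmx -> (forall i j : 'I_n, (j < i)%N -> Rm i j = 0) ->
  B = Qm *m Rm -> forall i, Rm i i != 0.
Proof.
move=> Bu Rt BE i; apply/negP => /eqP Ri0.
move: Bu; rewrite unitmxE BE det_mulmx -(det_tr Rm) (det_trig (A := Rm^T)).
  by rewrite (bigD1 i)//= mxE Ri0 mul0r mulr0 unitr0.
by apply/is_trig_mxP => j k jk; rewrite mxE Rt.
Qed.

Lemma sumsq_mx (n : nat) (v : 'cV[R]_n) : \sum_i v i 0 ^+ 2 = (v^T *m v) 0 0.
Proof. by rewrite mxE; apply: eq_bigr => i _; rewrite mxE expr2. Qed.

Lemma orth_sumsq (n : nat) (Q : 'M[R]_n) (w : 'cV[R]_n) :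
  Q^T *m Q = 1%:M -> \sum_i (Q *m w) i 0 ^+ 2 = \sum_i w i 0 ^+ 2.
Proof.
by move=> QQ; rewrite !sumsq_mx trmx_mul -mulmxA (mulmxA Q^T) QQ mul1mx.
Qed.

Lemma Rrow (n : nat) (Qm Rm : 'M[R]_n) (c : 'cV[R]_n) (x : 'cV[int]_n) i :
  (forall i j : 'I_n, (j < i)%N -> Rm i j = 0) -> Rm i i != 0 ->
  (Rm *m intv R x - Qm^T *m c) i 0 = Rm i i * ((x i 0)%:~R - mu_i Qm Rm c x i).
Proof.
move=> Rt Rii; rewrite !mxE /mu_i.
rewrite (bigD1 i) //= (bigID (fun j : 'I_n => (i < j)%N)) /=.
rewrite [X in _ + (_ + X)]big1; last first.
  move=> j /andP[ji]; rewrite -leqNgt leq_eqVlt => /orP[/eqP/val_inj eji|lt].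
    by rewrite eji eqxx in ji.
  by rewrite Rt // mul0r.
rewrite addr0 mxE (eq_bigl (fun j : 'I_n => (i < j)%N)); last first.
  move=> j; case: (ltnP i j) => [lt|]; last by rewrite andbF.
  by rewrite andbT; apply/negP => /eqP eji; rewrite eji ltnn in lt.
under eq_bigr do rewrite mxE.
set sm := \sum_(j < n | (i < j)%N) _.
rewrite [(Qm^T *m c) i 0]mxE.
by field.
Qed.
End Mx.
Section Mx2.
Variable R : realType.

Lemma rhov_prod (n : nat) (B Qm Rm : 'M[R]_n) (s : R) (c : 'cV[R]_n) (x : 'cV[int]_n) :
  Qm^T *m Qm = 1%:M -> (forall i j : 'I_n, (j < i)%N -> Rm i j = 0) ->
  B = Qm *m Rm -> (forall i, Rm i i != 0) -> 0 < s ->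
  rhov s c (B *m intv R x) =
  \prod_i rho1 (s_i s Rm i) (mu_i Qm Rm c x i) (x i 0)%:~R.
Proof.
move=> QQ Rt BE Rd s0; have sn0 : s != 0 by rewrite gt_eqF.
have QQ' : Qm *m Qm^T = 1%:M := mulmx1C QQ.
have E : B *m intv R x - c = Qm *m (Rm *m intv R x - Qm^T *m c).
  by rewrite mulmxBr !mulmxA QQ' mul1mx BE.
rewrite /rhov E /vnorm sqr_sqrtr; last by apply: sumr_ge0 => i _; exact: sqr_ge0.
rewrite orth_sumsq // mulr_sumr mulr_suml expR_sum; apply: eq_bigr => i _.
have Rii := Rd i.
rewrite Rrow // /rho1 /s_i; congr expR.
rewrite exprMn expr_div_n real_normK ?num_real//.

by rewrite [in RHS]invf_div; ring.
Qed.
End Mx2.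
Section Mx3.
Variable R : realType.

Lemma comp_le_vnorm (n : nat) (v : 'cV[R]_n) j : `|v j 0| <= vnorm v.
Proof.
rewrite /vnorm -sqrtr_sqr ler_sqrt; last by apply: sumr_ge0 => i _; exact: sqr_ge0.
rewrite (bigD1 j) //= lerDl; apply: sumr_ge0 => i _; exact: sqr_ge0.
Qed.

Lemma ballX_bound (n : nat) (B : 'M[R]_n) (c : 'cV[R]_n) (Rad : R) :
  B \in unitmx -> exists N : nat, forall x, ballX B c Rad x -> forall i j, (`|x i j| <= N)%N.
Proof.
move=> Bu.
set C := Rad + \sum_j `|c j 0|.
set M := \sum_i \sum_j `|invmx B i j|.
exists (Num.truncn (M * C)) => x xb i j.
have j0 : j = 0 by apply/val_inj => /=; case: j => -[].
subst j.
set y := B *m intv R x.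
have yb : forall k, `|y k 0| <= C.
  move=> k; have h := comp_le_vnorm (y - c) k; rewrite [(y - c) k 0]mxE [(- c) k 0]mxE in h.
  apply: (le_trans (_ : _ <= `|y k 0 - c k 0| + `|c k 0|)).
    by have := ler_normD (y k 0 - c k 0) (c k 0); rewrite subrK.
  apply: lerD; first by apply: (le_trans h); exact: xb.
  rewrite (bigD1 k) //= lerDl; apply: sumr_ge0 => *; exact: normr_ge0.
have xe : intv R x = invmx B *m y by rewrite /y mulKmx.
have hx : `|(x i 0)%:~R : R| <= M * C.
  have -> : (x i 0)%:~R = intv R x i 0 by rewrite mxE.
  rewrite xe mxE.
  apply: (le_trans (ler_norm_sum _ _ _)).
  apply: (le_trans (_ : _ <= \sum_j `|invmx B i j| * C)).
    apply: ler_sum => k _; rewrite normrM; apply: ler_wpM2l => //.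
  rewrite -mulr_suml ler_wpM2r //.
    rewrite /C addr_ge0 //; last by apply: sumr_ge0 => *; exact: normr_ge0.
    by apply: le_trans xb; rewrite /vnorm sqrtr_ge0.
  rewrite /M [leRHS](bigD1 i) //= lerDl; apply: sumr_ge0 => *; apply: sumr_ge0 => *; exact: normr_ge0.
rewrite -intr_norm -natr_absz in hx.
have h2 := truncnS_gt (M * C).
have : (`|x i 0|%:R : R) < (Num.truncn (M * C)).+1%:R by apply: le_lt_trans hx h2.
by rewrite ltr_nat ltnS.
Qed.
End Mx3.
Section Mx4.
Variable R : realType.

Lemma ballX_fin (n : nat) (B : 'M[R]_n) (c : 'cV[R]_n) (Rad : R) :
  B \in unitmx -> finite_set (ballX B c Rad).
Proof.
move=> Bu; have [N hN] := ballX_bound c Rad Bu.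
apply: (@sub_finite_set _ _ [set map_mx (fun k : 'I_(N.*2.+1) => (k%:Z - N%:Z)%R) v
   | v in [set: 'cV['I_(N.*2.+1)]_n]]); last exact: finite_image finite_finset.
move=> x xb; exists (\matrix_(i, j) inord (absz (x i j + N%:Z))) => //.
apply/matrixP => i j; rewrite !mxE inordK.
  have := hN x xb i j; move: (x i j) => z h.
  rewrite gez0_abs ?addrK //; lia.
have := hN x xb i j; move: (x i j) => z h.
have : (0 <= z + N)%R by lia.
move=> /gez0_abs h2; rewrite -ltz_nat h2; lia.
Qed.
End Mx4.
Section Fin.
Variable R : realType.

Lemma rhoZ_S (s mu : R) : rhoZ s mu = S (pi / s ^+ 2) (- mu).
Proof.
rewrite /rhoZ /S /th; congr fine; apply: eq_esum => k _; congr EFin.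
by rewrite /rho1 /gE; congr expR; ring.
Qed.

Lemma rhoZ_gt0 (s mu : R) : 0 < s -> 0 < rhoZ s mu.
Proof. by move=> s0; rewrite rhoZ_S S_gt0// divr_gt0 ?pi_gt0 ?exprn_gt0. Qed.

Lemma rhoZ_le (s mu : R) : 0 < s -> rhoZ s mu <= rhoZ s 0.
Proof.
by move=> s0; rewrite !rhoZ_S oppr0 S_le0// divr_gt0 ?pi_gt0 ?exprn_gt0.
Qed.

Lemma esum_finE (T : choiceType) (A : set T) (f : T -> R) :
  finite_set A -> (forall x, 0 <= f x) ->
  \esum_(x in A) (f x)%:E = (\sum_(x \in A) f x)%:E.
Proof. by move=> fA f0; rewrite esum_fset// ?fsumEFin// => x _; rewrite lee_fin. Qed.
End Fin.
Theorem proposition1 (R : realType) (n : nat) (B Qm Rm : 'M[R]_n)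
    (s : R) (c : 'cV[R]_n) (Rad : R) :
  B \in unitmx ->
  Qm^T *m Qm = 1%:M ->
  (forall i j : 'I_n, (j < i)%N -> Rm i j = 0) ->
  B = Qm *m Rm ->
  0 < s -> 0 < Rad ->
  ballX B c Rad !=set0 ->
  (0 < pR s B Qm Rm c Rad /\ pR s B Qm Rm c Rad <= 1) /\
  (forall x : 'cV[int]_n,
      pR s B Qm Rm c Rad * piR s B c Rad x <= QR s B Qm Rm c Rad x).
Proof.
move=> Bu QQ Rt BE s0 Rad0 [x0 x0b].
have Rd := Rdiag_neq0 Bu Rt BE.
have si0 : forall i, 0 < s_i s Rm i.
  by move=> i; rewrite /s_i divr_gt0// normr_gt0.
set P := \prod_(i < n) rhoZ (s_i s Rm i) 0.
have P0 : 0 < P by apply: prodr_gt0 => i _; exact: rhoZ_gt0.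
set rho := fun x : 'cV[int]_n => rhov s c (B *m intv R x).
have rho0 : forall x, 0 <= rho x by move=> x; exact: expR_ge0.
have kQE : forall x, kleinQ s Qm Rm c x =
    rho x / \prod_(i < n) rhoZ (s_i s Rm i) (mu_i Qm Rm c x i).
  by move=> x; rewrite /kleinQ prodf_div /rho (rhov_prod _ _ QQ Rt BE Rd s0).
have kQ_ge : forall x, rho x / P <= kleinQ s Qm Rm c x.
  move=> x; rewrite kQE ler_wpM2l// lef_pV2 ?posrE//; last first.
    by apply: prodr_gt0 => i _; exact: rhoZ_gt0.
  by apply: ler_prod => i _; rewrite ltW ?rhoZ_gt0 ?rhoZ_le.
have kQ0 : forall x, 0 <= kleinQ s Qm Rm c x.
  by move=> x; apply: le_trans (kQ_ge x); rewrite divr_ge0// ltW.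
have fin := ballX_fin c Rad Bu.
set QXv := QX s B Qm Rm c Rad.
set rX := rhoX s B c Rad.
have EQ : \esum_(x in ballX B c Rad) (kleinQ s Qm Rm c x)%:E = QXv%:E.
  by rewrite /QXv /QX esum_finE.
have ER : \esum_(x in ballX B c Rad) (rho x)%:E = rX%:E.
  by rewrite /rX /rhoX esum_finE.
have rX0 : 0 < rX.
  rewrite -lte_fin -ER; apply: (@lt_le_trans _ _ (rho x0)%:E).
    by rewrite lte_fin /rho /rhov expR_gt0.
  apply: esum_ge; exists [set x0]; last by rewrite fsbig_set1.
  by split; [exact: finite_set1 | move=> y ->].
have QXge : rX / P <= QXv.
  rewrite -lee_fin -EQ mulrC EFinM -ER -esumZ; last 2 first.
    by rewrite invr_ge0 ltW.
    by move=> x _; rewrite lee_fin.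
  by apply: le_esum => x _; rewrite -EFinM lee_fin mulrC kQ_ge.
have D0 : 0 < rX / P by rewrite divr_gt0.
have QX0 : 0 < QXv by apply: lt_le_trans QXge.
have pRE : pR s B Qm Rm c Rad = rX / P / QXv by [].
split.
  rewrite pRE; split; first by rewrite divr_gt0.
  by rewrite ler_pdivrMr// mul1r.
move=> x; rewrite pRE /piR /QR; case: ifP => _; last by rewrite mulr0.
rewrite -/rho -/rX -/QXv.
have -> : rX / P / QXv * (rho x / rX) = (rho x / P) / QXv.
  by field; rewrite ?gt_eqF.
by rewrite ler_pM2r ?invr_gt0.
Qed.
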